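(* Let $X$ be a finite set and let $g_1,\ldots,g_k$ be closure operators on $X$. Then the map $f:2^X\to 2^X$ defined by $f(A)=\bigcap_{i=1}^k g_i(A)$ is a closure operator (we say $f$ is generated from $g_1,\ldots,g_k$). Moreover, if $f,g_1,\ldots,g_k$ are closure operators on $X$, then $f$ is generated from $g_1,\ldots,g_k$ (i.e. $f(A)=\bigcap_{i=1}^k g_i(A)$ for all $A\subseteq X$) if and only if both of the following hold: (i) $S(g_i)\subseteq S(f)$ for all $i\in\{1,\ldots,k\}$; (ii) whenever $A\in S(f)$ and $x\in X\setminus A$, there exists $i\in\{1,\ldots,k\}$ such that $x\notin g_i(A)$.
   Context: A closure operator on $X$ is a map $f:2^X\to 2^X$ such that $A\subseteq f(A)$ for all $A$, $f(\emptyset)=\emptyset$, $f(f(A))=f(A)$, and $A\subseteq B$ implies $f(A)\subseteq f(B)$. $S(f)=\{A\subseteq X: f(A)=A\}$ is the set of closed sets of $f$. *)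

(* Defs.v *)
From mathcomp Require Import all_boot.
Set Implicit Arguments. Unset Strict Implicit. Unset Printing Implicit Defensive.

Definition closure_operator (X : finType) (f : {set X} -> {set X}) : Prop :=
  [/\ (forall A : {set X}, A \subset f A),
      f set0 = set0,
      (forall A : {set X}, f (f A) = f A) &
      (forall A B : {set X}, A \subset B -> f A \subset f B)].

Definition closed_sets (X : finType) (f : {set X} -> {set X}) : {set {set X}} :=
  [set A | f A == A].

Definition generated (X : finType) (k : nat) (g : 'I_k -> {set X} -> {set X})
  : {set X} -> {set X} :=
  fun A => \bigcap_(i < k) g i A.

(* Main.v *)
Require Import Defs.
From mathcomp Require Import all_boot.

Theorem theorem2 (X : finType) (k : nat) (hk : 0 < k)
    (g : 'I_k -> {set X} -> {set X})
    (hg : forall i, closure_operator (g i)) :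
  closure_operator (generated g) /\
  (forall f : {set X} -> {set X}, closure_operator f ->
     ((forall A : {set X}, f A = generated g A) <->
      ((forall i, closed_sets (g i) \subset closed_sets f) /\
       (forall (A : {set X}) (x : X), A \in closed_sets f -> x \notin A ->
          exists i, x \notin g i A)))).
Proof.
have ext i (A : {set X}) : A \subset g i A by case: (hg i).
have idm i (A : {set X}) : g i (g i A) = g i A by case: (hg i).
have mon i (A B : {set X}) : A \subset B -> g i A \subset g i B by case: (hg i) => _ _ _; apply.
have g0 i : g i set0 = set0 by case: (hg i).
have genS (A : {set X}) i : generated g A \subset g i A by apply: bigcap_inf.
have extG (A : {set X}) : A \subset generated g A by apply/bigcapsP => i _; apply: ext.
split.
  split => //.
  - apply/eqP; rewrite -subset0; apply: subset_trans (genS set0 (Ordinal hk)) _; by rewrite g0.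
  - move=> A; apply/eqP; rewrite eqEsubset extG andbT.
    apply/bigcapsP => i _.
    apply: subset_trans (genS _ i) _; apply: subset_trans (mon i _ _ (genS A i)) _; by rewrite idm.
  - move=> A B AB; apply/bigcapsP => i _.
    apply: subset_trans (genS _ i) _; exact: mon.
move=> f [fext f0 fidm fmon]; split.
  move=> hf; split.
    move=> i; apply/subsetP => B; rewrite !inE => /eqP gB.
    rewrite eqEsubset fext andbT hf -{2}gB; exact: genS.
  move=> A x; rewrite inE hf => /eqP HA xA.
  have : x \notin generated g A by rewrite HA.
  move=> /bigcapP /=; case: (boolP [forall i : 'I_k, x \in g i A]).
    move=> /forallP H [] i _; exact: H.
  rewrite negb_forall => /existsP [i Hi] _; by exists i.
move=> [h1 h2] A; apply/eqP; rewrite eqEsubset; apply/andP; split.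
  apply/bigcapsP => i _.
  have : g i A \in closed_sets f.
    apply: (subsetP (h1 i)); by rewrite inE idm.
  rewrite inE => /eqP <-; exact: fmon.
apply/subsetP => x xg; apply/negPn/negP => xn.
have fAc : f A \in closed_sets f by rewrite inE fidm.
have [i Hi] := h2 (f A) x fAc xn.
move/negP: Hi; apply.
apply: (subsetP (mon i A (f A) (fext A))).
exact: (subsetP (genS A i)).
Qed.
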